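(* LexiPS is not lexi-efficient. Concretely, take $n=3$, $p=2$, $D_F=\{1_F,2_F,3_F\}$, $D_B=\{1_B,2_B,3_B\}$, and lexicographic preferences: agent 1: $F\rhd_1 B$, $1_F\rhd 2_F\rhd 3_F$, $1_B\rhd 2_B\rhd 3_B$; agent 2: $F\rhd_2 B$, $1_F\rhd 2_F\rhd 3_F$, $1_B\rhd 3_B\rhd 2_B$; agent 3: $B\rhd_3 F$, $1_F\rhd 2_F\rhd 3_F$, $2_B\rhd 3_B\rhd 1_B$. Then LexiPS gives agent 1 the allocation with share $0.25$ of each of $1_F1_B,1_F3_B,2_F1_B,2_F3_B$, and this allocation is lexicographically dominated w.r.t. $\succ_1$ by the allocation with share $0.5$ of $1_F1_B$ and $0.5$ of $2_F3_B$.
   Context: Setting: $N$ agents, types $D_i$ with $|D_i|=n$ pairwise disjoint, unit supply, bundles $\mathcal D=\prod_i D_i$, $x_i$ the type-$i$ component. Lexicographic preference: importance order $\rhd_j$ over types and orders $\rhd^i_j$ on each $D_i$; $x\succ_j y$ iff some type $i$ has $x_i\rhd^i_j y_i$ and $x_{i'}=y_{i'}$ for all $i'\rhd_j i$. Lexicographic dominance: allocation $p$ lexicographically dominates $q$ w.r.t. $\succ$ if there is a bundle $x$ with $p_x>q_x$ and $p_y\ge q_y$ for every $y\succ x$. An assignment $P$ is lexi-efficient if there is no assignment $Q$ such that $Q_j$ lexicographically dominates $P_j$ w.r.t. $\succ_j$ for every agent $j$. LexiPS: supplies start at $1$ and carry across phases; in phase $k=1,\dots,p$ (unit duration), each agent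 $j$ eats at rate $1$ her $\rhd^i_j$-favorite item with positive remaining supply among items of her $k$-th most important type $i$; with $s^i_{j,o}$ the amount eaten of $o\in D_i$, output $p_{j,x}=\prod_i s^i_{j,x_i}$. *)

(* Defs.v *)
From HB Require Import structures.
From mathcomp Require Import all_boot all_order all_algebra.
Set Implicit Arguments. Unset Strict Implicit. Unset Printing Implicit Defensive.
Import Order.TTheory GRing.Theory Num.Theory.
Local Open Scope ring_scope.

(* Setting: p types, each type i has item set D_i, modelled as 'I_n     *)
(* (tagged by the type, so the D_i are pairwise disjoint).  A bundle    *)
Definition bundle (p n : nat) := {ffun 'I_p -> 'I_n}.
Definition allocation (p n : nat) := {ffun bundle p n -> rat}.

(* A lexicographic preference: [imp] lists the types from most to least
   important (the order |>_j); [iord i] lists the items of type i from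
   most to least preferred (the order |>^i_j). *)
Record lexpref (p n : nat) := LexPref {
  imp : seq 'I_p;
  iord : 'I_p -> seq 'I_n }.

Definition wf_lexpref p n (P : lexpref p n) : bool :=
  perm_eq (imp P) (enum 'I_p) && [forall i, perm_eq (iord P i) (enum 'I_n)].

Definition lex_pref p n (P : lexpref p n) (x y : bundle p n) : bool :=
  [exists i : 'I_p,
     (index (x i) (iord P i) < index (y i) (iord P i))%N &&
     [forall i' : 'I_p, (index i' (imp P) < index i (imp P))%N ==> (x i' == y i')]].

Definition lex_dom p n (P : lexpref p n) (a b : allocation p n) : Prop :=
  exists x : bundle p n, b x < a x /\ forall y, lex_pref P y x -> b y <= a y.

Definition is_assignment N p n (Q : 'I_N -> allocation p n) : Prop :=
  (forall j x, 0 <= Q j x) /\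
  (forall j, \sum_(x : bundle p n) Q j x = 1) /\
  (forall (i : 'I_p) (o : 'I_n),
     \sum_(j < N) \sum_(x : bundle p n | x i == o) Q j x = 1).

Definition lexi_efficient N p n (prefs : 'I_N -> lexpref p n)
  (P : 'I_N -> allocation p n) : Prop :=
  ~ exists Q : 'I_N -> allocation p n,
      is_assignment Q /\ forall j, lex_dom (prefs j) (Q j) (P j).

(* LexiPS: simultaneous eating, exact event-driven simulation.          *)
Section LexiPS.
Variables (N p n : nat) (prefs : 'I_N -> lexpref p n).

Record ps_state := PSState {
  supply : 'I_p * 'I_n -> rat;
  eaten  : 'I_N * 'I_p * 'I_n -> rat;
  rtime  : rat }.

Definition target (k : nat) (sup : 'I_p * 'I_n -> rat) (j : 'I_N)
  : option ('I_p * 'I_n) :=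
  if onth (imp (prefs j)) k is Some t then
    if ohead [seq o <- iord (prefs j) t | 0 < sup (t, o)] is Some o
    then Some (t, o) else None
  else None.

Definition eaters k sup (io : 'I_p * 'I_n) : nat :=
  count (fun j => target k sup j == Some io) (enum 'I_N).

(* One event: everybody eats at rate 1 until the first targeted item is
   exhausted or the phase's time runs out. *)
Definition ps_step (k : nat) (st : ps_state) : ps_state :=
  let sup := supply st in
  let tg := target k sup in
  let targets := pmap tg (enum 'I_N) in
  if (targets == [::]) || (rtime st <= 0) then st else
  let dt := foldr (fun io m => Order.min m (sup io / (eaters k sup io)%:R))
                  (rtime st) targets in
  PSState
    (fun io => sup io - dt * (eaters k sup io)%:R)
    (fun jio : 'I_N * 'I_p * 'I_n =>
       eaten st jio + (if tg jio.1.1 == Some (jio.1.2, jio.2) then dt else 0))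
    (rtime st - dt).

(* Each non-final event exhausts an item, so p*n+1 events suffice. *)
Definition ps_phase (k : nat) (st : ps_state) : ps_state :=
  iter (p * n).+1 (ps_step k) st.

Definition lexiPS_state : ps_state :=
  foldl (fun st k => ps_phase k (PSState (supply st) (eaten st) 1))
        (PSState (fun _ => 1) (fun _ => 0) 1) (iota 0 p).

Definition lexiPS (j : 'I_N) : allocation p n :=
  [ffun x : bundle p n => \prod_(i < p) eaten lexiPS_state (j, i, x i)].

End LexiPS.

(* The concrete instance: N = n = 3, p = 2, type F = 0, type B = 1,    *)
(* item k_T is represented by the ordinal k-1 of type T.                *)
Definition tF : 'I_2 := @Ordinal 2 0 isT.
Definition tB : 'I_2 := @Ordinal 2 1 isT.
Definition it1 : 'I_3 := @Ordinal 3 0 isT.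
Definition it2 : 'I_3 := @Ordinal 3 1 isT.
Definition it3 : 'I_3 := @Ordinal 3 2 isT.
Definition agent1 : 'I_3 := @Ordinal 3 0 isT.
Definition agent2 : 'I_3 := @Ordinal 3 1 isT.
Definition agent3 : 'I_3 := @Ordinal 3 2 isT.

Definition ex_pref (j : 'I_3) : lexpref 2 3 :=
  if j == agent1 then
    LexPref [:: tF; tB] (fun i => if i == tF then [:: it1; it2; it3] else [:: it1; it2; it3])
  else if j == agent2 then
    LexPref [:: tF; tB] (fun i => if i == tF then [:: it1; it2; it3] else [:: it1; it3; it2])
  else
    LexPref [:: tB; tF] (fun i => if i == tF then [:: it1; it2; it3] else [:: it2; it3; it1]).

Definition bnd (a b : 'I_3) : bundle 2 3 := [ffun i => if i == tF then a else b].

Definition alloc_lexiPS_agent1 : allocation 2 3 :=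
  [ffun x => if x \in [:: bnd it1 it1; bnd it1 it3; bnd it2 it1; bnd it2 it3]
             then 1 / 4 else 0].

Definition alloc_better_agent1 : allocation 2 3 :=
  [ffun x => if x == bnd it1 it1 then 1 / 2
             else if x == bnd it2 it3 then 1 / 2 else 0].

(* Main.v *)
Require Import Defs.
From mathcomp Require Import all_boot all_order all_algebra.
From Stdlib Require Import FunctionalExtensionality.
Import Order.TTheory GRing.Theory Num.Theory.
Local Open Scope ring_scope.

Definition agents : seq 'I_3 := [:: agent1; agent2; agent3].
Lemma e3 : enum 'I_3 = agents.
Proof. by apply: (inj_map val_inj); rewrite val_enum_ord. Qed.

Definition keysPI : seq ('I_2 * 'I_3) :=
  [seq (i, o) | i <- [:: tF; tB], o <- [:: it1; it2; it3]].
Definition keysJPI : seq ('I_3 * 'I_2 * 'I_3) :=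
  [seq (j, io.1, io.2) | j <- agents, io <- keysPI].

Lemma I2E (i : 'I_2) : i = tF \/ i = tB.
Proof. case: i => [[|[|//]] Hi]; [left|right]; exact: val_inj. Qed.
Lemma I3E (i : 'I_3) : [\/ i = it1, i = it2 | i = it3].
Proof. case: i => [[|[|[|//]]] Hi]; [apply: Or31|apply: Or32|apply: Or33]; exact: val_inj. Qed.

Lemma memPI io : io \in keysPI.
Proof. case: io => i o; case: (I2E i) => ->; by case: (I3E o) => ->. Qed.
Lemma memJPI k : k \in keysJPI.
Proof. case: k => [[j i] o]; case: (I3E j) => ->; case: (I2E i) => ->; by case: (I3E o) => ->. Qed.

Definition tabstate (st : ps_state 3 2 3) : ps_state 3 2 3 :=
  let L1 := map (supply st) keysPI in
  let L2 := map (eaten st) keysJPI in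
  PSState (fun io => nth 0 L1 (index io keysPI))
          (fun k => nth 0 L2 (index k keysJPI)) (rtime st).

Lemma tabstateE st : tabstate st = st.
Proof.
case: st => s e r; rewrite /tabstate; cbv zeta; congr PSState; apply: functional_extensionality => k.
  by rewrite (nth_map k) ?index_mem ?memPI // nth_index // memPI.
by rewrite (nth_map k) ?index_mem ?memJPI // nth_index // memJPI.
Qed.

Definition eaters' k sup (io : 'I_2 * 'I_3) : nat :=
  count (fun j => target ex_pref k sup j == Some io) agents.

Definition ps_step' (k : nat) (st : ps_state 3 2 3) : ps_state 3 2 3 :=
  let sup := supply st in
  let tg := target ex_pref k sup in
  let targets := pmap tg agents in
  if (targets == [::]) || (rtime st <= 0) then st else
  let dt := foldr (fun io m => Order.min m (sup io / (eaters' k sup io)%:R))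
                  (rtime st) targets in
  PSState
    (fun io => sup io - dt * (eaters' k sup io)%:R)
    (fun jio : 'I_3 * 'I_2 * 'I_3 =>
       eaten st jio + (if tg jio.1.1 == Some (jio.1.2, jio.2) then dt else 0))
    (rtime st - dt).

Lemma ps_stepE k st : ps_step ex_pref k st = ps_step' k st.
Proof. by rewrite /ps_step /ps_step' /eaters /eaters' e3. Qed.

Definition step2 k st := tabstate (ps_step' k st).

Definition S' : ps_state 3 2 3 :=
  foldl (fun st k => iter 7 (step2 k) (PSState (supply st) (eaten st) 1))
        (PSState (fun _ => 1) (fun _ => 0) 1) (iota 0 2).

Lemma S'E : lexiPS_state ex_pref = S'.
Proof.
rewrite /lexiPS_state /S'; congr foldl; apply: functional_extensionality => st;
apply: functional_extensionality => k.
rewrite /ps_phase; apply: eq_iter => s; by rewrite /step2 tabstateE ps_stepE.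
Qed.

Definition Etab (k : 'I_3 * 'I_2 * 'I_3) : rat :=
  let: (j, i, o) := k in
  if j == agent3 then (if ((i == tF) && (o == it3)) || ((i == tB) && (o == it2)) then 1 else 0)
  else if ((o == it2) && (i == tF)) || (o == it1) || ((i == tB) && (o == it3)) then 1/2 else 0.

Lemma S'_ok : all (fun k => eaten S' k == Etab k) keysJPI.
Proof. vm_compute. reflexivity. Qed.

Lemma eatenE k : eaten (lexiPS_state ex_pref) k = Etab k.
Proof. by rewrite S'E; move/allP: S'_ok => /(_ k (memJPI k)) /eqP. Qed.

Lemma bndF a b : bnd a b tF = a. Proof. by rewrite /bnd ffunE. Qed.
Lemma bndB a b : bnd a b tB = b. Proof. by rewrite /bnd ffunE. Qed.
Lemma bndE (x : bundle 2 3) : x = bnd (x tF) (x tB).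
Proof. by apply/ffunP => i; rewrite /bnd ffunE; case: (I2E i) => ->. Qed.
Lemma bnd_eq a b c d : (bnd a b == bnd c d) = (a == c) && (b == d).
Proof.
apply/eqP/andP => [H|[/eqP-> /eqP->]] //.
by have := congr1 (fun x : bundle 2 3 => (x tF, x tB)) H; rewrite /= !bndF !bndB => -[-> ->]; rewrite !eqxx.
Qed.

Lemma PE j a b : lexiPS ex_pref j (bnd a b) = Etab (j, tF, a) * Etab (j, tB, b).
Proof.
rewrite /lexiPS ffunE big_ord_recr big_ord1 /= !eatenE.
have -> : widen_ord (leqnSn 1) ord0 = tF by apply: val_inj.
have -> : (ord_max : 'I_2) = tB by apply: val_inj.
by rewrite bndF bndB.
Qed.

Lemma sum3 (G : 'I_3 -> rat) : \sum_(i < 3) G i = G it1 + G it2 + G it3.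
Proof.
rewrite !big_ord_recr big_ord0 /= add0r.
by congr (G _ + G _ + G _); apply: val_inj.
Qed.

Lemma sum_bundle (F : bundle 2 3 -> rat) :
  \sum_(x : bundle 2 3) F x = \sum_(a < 3) \sum_(b < 3) F (bnd a b).
Proof.
rewrite pair_big /=.
rewrite (reindex (fun ab : 'I_3 * 'I_3 => bnd ab.1 ab.2)) //=.
exists (fun x : bundle 2 3 => (x tF, x tB)) => [[a b] _|x _] /=.
  by rewrite bndF bndB.
by rewrite -bndE.
Qed.

Lemma lex_pref_idx P (y x : bundle 2 3) : lex_pref P y x ->
  exists i, (index (y i) (iord P i) < index (x i) (iord P i))%N.
Proof. by move=> /existsP [i /andP [H _]]; exists i. Qed.

Lemma e2 : enum 'I_2 = [:: tF; tB].
Proof. by apply: (inj_map val_inj); rewrite val_enum_ord. Qed.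

Definition A2 : allocation 2 3 :=
  [ffun x => if x == bnd it1 it1 then 1 / 2
             else if x == bnd it3 it3 then 1 / 2 else 0].
Definition A3 : allocation 2 3 :=
  [ffun x => if x == bnd it2 it2 then 1 / 2
             else if x == bnd it3 it2 then 1 / 2 else 0].
Definition Qa (j : 'I_3) : allocation 2 3 :=
  if j == agent1 then alloc_better_agent1 else if j == agent2 then A2 else A3.

Ltac decb := vm_compute; reflexivity.
Ltac simp := rewrite /Qa /= /alloc_better_agent1 /A2 /A3 /alloc_lexiPS_agent1 ?PE ?ffunE ?inE ?bnd_eq ?bndF ?bndB.
Ltac cases3 a := case: (I3E a) => ->.

Lemma part1 : forall j, wf_lexpref (ex_pref j).
Proof.
move=> j; rewrite /wf_lexpref e2 e3; apply/andP; split.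
  by cases3 j.
by apply/forallP => i; cases3 j; case: (I2E i) => ->.
Qed.

Lemma part2 : lexiPS ex_pref agent1 = alloc_lexiPS_agent1.
Proof.
apply/ffunP => x; rewrite [x]bndE; move: (x tF) (x tB) => a b.
by cases3 a; cases3 b; simp; apply/eqP; decb.
Qed.

Lemma top1 j (y : bundle 2 3) : (j == agent1) || (j == agent2) ->
  ~~ lex_pref (ex_pref j) y (bnd it1 it1).
Proof.
move=> Hj; apply/negP => /lex_pref_idx [i].
by case/orP: Hj => /eqP ->; case: (I2E i) => ->; rewrite ?bndF ?bndB /= ltn0.
Qed.

Lemma part3 : lex_dom (ex_pref agent1) alloc_better_agent1 alloc_lexiPS_agent1.
Proof.
exists (bnd it1 it1); split; first by simp; decb.
by move=> y H; move: (@top1 agent1 y isT); rewrite H.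
Qed.

Lemma sum_bundle_cond (P : pred (bundle 2 3)) (F : bundle 2 3 -> rat) :
  \sum_(x : bundle 2 3 | P x) F x = \sum_(a < 3) \sum_(b < 3) (if P (bnd a b) then F (bnd a b) else 0).
Proof. by rewrite big_mkcond sum_bundle. Qed.
Lemma t1' j x : 0 <= Qa j x.
Proof. rewrite [x]bndE; move: (x tF) (x tB) => a b.
  (by cases3 j; cases3 a; cases3 b; simp; decb). Qed.
Lemma t2' j : \sum_(x : bundle 2 3) Qa j x = 1.
Proof. rewrite sum_bundle !sum3.
  (by cases3 j; simp; apply/eqP; decb). Qed.
Lemma t3' (i : 'I_2) (o : 'I_3) : \sum_(j < 3) \sum_(x : bundle 2 3 | x i == o) Qa j x = 1.
Proof. rewrite sum3 !sum_bundle_cond !sum3.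
  (by case: (I2E i) => ->; cases3 o; simp; apply/eqP; decb). Qed.
Lemma Qa_dom j : lex_dom (ex_pref j) (Qa j) (lexiPS ex_pref j).
Proof.
cases3 j.
- exists (bnd it1 it1); split; first by simp; decb.
  by move=> y H; move: (@top1 agent1 y isT); rewrite H.
- exists (bnd it1 it1); split; first by simp; decb.
  by move=> y H; move: (@top1 agent2 y isT); rewrite H.
- exists (bnd it2 it2); split; first by simp; decb.
  move=> y; rewrite [y]bndE; move: (y tF) (y tB) => a b.
  move=> /lex_pref_idx [i].
  cases3 a; cases3 b; try (by move=> _; simp; decb).
  by case: (I2E i) => ->; rewrite ?bndF ?bndB.
Qed.

Theorem mainTheorem6 :
  [/\ (forall j, wf_lexpref (ex_pref j)),
      lexiPS ex_pref agent1 = alloc_lexiPS_agent1,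
      lex_dom (ex_pref agent1) alloc_better_agent1 alloc_lexiPS_agent1
    & ~ lexi_efficient ex_pref (lexiPS ex_pref)].
Proof.
split; [exact: part1|exact: part2|exact: part3|].
move=> H; apply: H; exists Qa; split; last exact: Qa_dom.
split; [exact: t1'|split; [exact: t2'|exact: t3']].
Qed.
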